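(* Let $n\ge1$. On the class $\mathcal S_n\setminus\{\mathbb R^n,\emptyset\}$, the map $K\mapsto K^c$ is an isometry with respect to the Hausdorff distance, i.e. $d_H(K^c,L^c)=d_H(K,L)$ for all $K,L\in\mathcal S_n\setminus\{\mathbb R^n,\emptyset\}$.
   Context: $B(x,r)$ is the closed Euclidean ball and $B=B(0,1)$. For $A\subseteq\mathbb R^n$, $A^c=\bigcap_{x\in A}B(x,1)$. $\mathcal S_n$ is the class of all sets of the form $\bigcap_{x\in A}B(x,1)$, $A\subseteq\mathbb R^n$. The Hausdorff distance of compact convex sets $K,L$ is $d_H(K,L)=\inf\{\lambda\ge0:K\subseteq L+\lambda B,\ L\subseteq K+\lambda B\}=\sup_{u\in S^{n-1}}|h_K(u)-h_L(u)|$, where $h_K$ is the support function. *)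

(* Defs.v *)
From HB Require Import structures.
From mathcomp Require Import all_boot all_order all_algebra.
From mathcomp Require Import all_classical all_reals.
Set Implicit Arguments. Unset Strict Implicit. Unset Printing Implicit Defensive.
Import Order.TTheory GRing.Theory Num.Theory.
Local Open Scope ring_scope.
Local Open Scope classical_set_scope.

Definition edist (R : realType) (n : nat) (x y : 'rV[R]_n) : R :=
  Num.sqrt (\sum_(i < n) (x ord0 i - y ord0 i) ^+ 2).

Definition cball (R : realType) (n : nat) (x : 'rV[R]_n) (r : R) : set 'rV[R]_n :=
  [set y | edist x y <= r].

Definition spconv (R : realType) (n : nat) (A : set 'rV[R]_n) : set 'rV[R]_n :=
  \bigcap_(x in A) cball x 1.

Definition in_Sn (R : realType) (n : nat) (K : set 'rV[R]_n) : Prop :=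
  exists A : set 'rV[R]_n, K = spconv A.

Definition parallel_body (R : realType) (n : nat) (L : set 'rV[R]_n) (l : R) : set 'rV[R]_n :=
  [set y | exists2 z, L z & cball z l y].

Definition hausdorff (R : realType) (n : nat) (K L : set 'rV[R]_n) : R :=
  inf [set l : R | 0 <= l /\ K `<=` parallel_body L l /\ L `<=` parallel_body K l].

(* Main.v *)
Require Import Defs.
From mathcomp Require Import all_boot all_order all_algebra.
From mathcomp Require Import all_classical all_reals.
From mathcomp Require Import topology normedtype derive realfun.
From mathcomp Require Import ring lra.
Set Implicit Arguments. Unset Strict Implicit. Unset Printing Implicit Defensive.
Import Order.TTheory GRing.Theory Num.Theory.
Import numFieldNormedType.Exports.
Local Open Scope ring_scope.
Local Open Scope classical_set_scope.

Definition dot (R : realType) (n : nat) (u v : 'rV[R]_n) : R :=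
  \sum_(i < n) u ord0 i * v ord0 i.
Definition n2 (R : realType) (n : nat) (u : 'rV[R]_n) : R := dot u u.

Lemma dotC (R : realType) (n : nat) (u v : 'rV[R]_n) : dot u v = dot v u.
Proof. by apply: eq_bigr => i _; rewrite mulrC. Qed.

Lemma dotDl (R : realType) (n : nat) (u v w : 'rV[R]_n) :
  dot (u + v) w = dot u w + dot v w.
Proof. by rewrite /dot -big_split; apply: eq_bigr => i _; rewrite !mxE mulrDl. Qed.

Lemma dotZl (R : realType) (n : nat) (k : R) (u w : 'rV[R]_n) :
  dot (k *: u) w = k * dot u w.
Proof. by rewrite /dot mulr_sumr; apply: eq_bigr => i _; rewrite !mxE mulrA. Qed.

Lemma dotNl (R : realType) (n : nat) (u w : 'rV[R]_n) :
  dot (- u) w = - dot u w.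
Proof. by rewrite -scaleN1r dotZl mulN1r. Qed.

Lemma dotNr (R : realType) (n : nat) (u w : 'rV[R]_n) :
  dot w (- u) = - dot w u.
Proof. by rewrite dotC dotNl dotC. Qed.

Lemma dotDr (R : realType) (n : nat) (u v w : 'rV[R]_n) :
  dot w (u + v) = dot w u + dot w v.
Proof. by rewrite dotC dotDl !(dotC w). Qed.

Lemma dotZr (R : realType) (n : nat) (k : R) (u w : 'rV[R]_n) :
  dot w (k *: u) = k * dot w u.
Proof. by rewrite dotC dotZl dotC. Qed.

Lemma n2D (R : realType) (n : nat) (u v : 'rV[R]_n) :
  n2 (u + v) = n2 u + 2 * dot u v + n2 v.
Proof. rewrite /n2 dotDl !dotDr (dotC v u); ring. Qed.

Lemma n2Z (R : realType) (n : nat) (k : R) (u : 'rV[R]_n) :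
  n2 (k *: u) = k ^+ 2 * n2 u.
Proof. by rewrite /n2 dotZl dotZr mulrA expr2. Qed.

Lemma n2N (R : realType) (n : nat) (u : 'rV[R]_n) : n2 (- u) = n2 u.
Proof. by rewrite -scaleN1r n2Z sqrrN expr1n mul1r. Qed.

Lemma n2_ge0 (R : realType) (n : nat) (u : 'rV[R]_n) : 0 <= n2 u.
Proof. by apply: sumr_ge0 => i _; rewrite -expr2 sqr_ge0. Qed.

Lemma n2_eq0 (R : realType) (n : nat) (u : 'rV[R]_n) : n2 u <= 0 -> u = 0.
Proof.
move=> h; have h0 : n2 u = 0 by apply/eqP; rewrite eq_le h n2_ge0.
apply/rowP => i; rewrite mxE.
have H := @psumr_eq0P R _ xpredT (fun j : 'I_n => u ord0 j * u ord0 j)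
  (fun j _ => ltac:(exact: (sqr_ge0 (u ord0 j)))) h0 i isT.
by move: H => /eqP; rewrite mulf_eq0 orbb => /eqP.
Qed.

Lemma edistE (R : realType) (n : nat) (x y : 'rV[R]_n) :
  Defs.edist x y = Num.sqrt (n2 (x - y)).
Proof. by rewrite /edist /n2 /dot; congr Num.sqrt; apply: eq_bigr => i _; rewrite !mxE expr2. Qed.

Lemma sq_cont (R : realType) (n : nat) (z : 'rV[R]_n) :
  continuous (fun v : 'rV[R]_n => n2 (v - z)).
Proof.
rewrite /n2 /dot.
elim: (index_enum _) => [|j r IH].
  under eq_fun do rewrite big_nil. exact: cst_continuous.
under eq_fun do rewrite big_cons.
move=> v.
apply: (@continuousD R R _ (fun v : 'rV[R]_n => (v - z) ord0 j * (v - z) ord0 j)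
  (fun v => \sum_(j <- r) (v - z) ord0 j * (v - z) ord0 j)); last exact: IH.
have cj : continuous (fun v : 'rV[R]_n => (v - z) ord0 j).
  have -> : (fun v : 'rV[R]_n => (v - z) ord0 j) = (fun v => v ord0 j - z ord0 j).
    by apply/funext => w; rewrite !mxE.
  move=> w; apply: (@continuousB R R _ (fun v : 'rV[R]_n => v ord0 j) (fun=> z ord0 j));
    [exact: coord_continuous|exact: cst_continuous].
exact: (continuousM (cj v) (cj v)).
Qed.

Lemma n2B (R : realType) (n : nat) (u v : 'rV[R]_n) : n2 (u - v) = n2 (v - u).
Proof. by rewrite -n2N opprB. Qed.

Lemma edist_le (R : realType) (n : nat) (x y : 'rV[R]_n) (r : R) : 0 <= r ->
  (Defs.edist x y <= r) = (n2 (x - y) <= r ^+ 2).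
Proof.
move=> r0; rewrite edistE -[in RHS]ler_sqrt ?sqr_ge0 // sqrtr_sqr ger0_norm //.
Qed.

Lemma edistC (R : realType) (n : nat) (x y : 'rV[R]_n) :
  Defs.edist x y = Defs.edist y x.
Proof. by rewrite !edistE n2B. Qed.

Lemma spconvP (R : realType) (n : nat) (A : set 'rV[R]_n) y :
  spconv A y <-> (forall z, A z -> n2 (z - y) <= 1).
Proof.
rewrite /spconv /cball; split => [h z Az | h z Az].
  by have := h z Az; rewrite /= edist_le // expr1n.
by rewrite /= edist_le // expr1n; apply: h.
Qed.

Lemma dot0l (R : realType) (n : nat) (u : 'rV[R]_n) : dot 0 u = 0.
Proof. by rewrite /dot big1 // => i _; rewrite mxE mul0r. Qed.

Lemma dot_le (R : realType) (n : nat) (a b : 'rV[R]_n) (al be : R) :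
  0 <= al -> 0 <= be -> n2 a <= al ^+ 2 -> n2 b <= be ^+ 2 -> dot a b <= al * be.
Proof.
move=> al0 be0 ha hb.
have key := n2_ge0 (be *: a - al *: b).
rewrite n2D n2N dotNr dotZl dotZr !n2Z in key.
have [ab0|] := ltrP 0 (al * be).
  have h1 : be ^+ 2 * n2 a <= be ^+ 2 * al ^+ 2 by rewrite ler_wpM2l ?sqr_ge0.
  have h2 : al ^+ 2 * n2 b <= al ^+ 2 * be ^+ 2 by rewrite ler_wpM2l ?sqr_ge0.
  nra.
move=> abl; have ab0 : al * be = 0 by apply/eqP; rewrite eq_le abl mulr_ge0.
move/eqP: ab0; rewrite mulf_eq0 => /orP[] /eqP e0.
  move: ha; rewrite e0 expr0n /= => /n2_eq0 ->; rewrite dot0l; lra.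
move: hb; rewrite e0 expr0n /= => /n2_eq0 ->; rewrite dotC dot0l; lra.
Qed.

Lemma closed_spconv (R : realType) (n : nat) (L : set 'rV[R]_n) : closed (spconv L).
Proof.
have -> : spconv L = \bigcap_(z in L) ((fun v => n2 (v - z)) @^-1` [set t | t <= 1]).
  apply/seteqP; split => v /=.
    by move/spconvP => h z Lz /=; rewrite n2B; exact: h.
  by move=> h; apply/spconvP => z Lz; rewrite n2B; exact: h z Lz.
apply: closed_bigI => z _; apply: preimage_closed; last exact: closed_le.
by move=> ? _; exact: sq_cont.
Qed.

Lemma exists_min (R : realType) (n : nat) (L : set 'rV[R]_n) (x y0 : 'rV[R]_n) :
  spconv L y0 ->
  exists2 y, spconv L y & forall w, spconv L w -> n2 (x - y) <= n2 (x - w).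
Proof.
move=> hy0.
pose f := fun v : 'rV[R]_n => n2 (v - x).
pose C := spconv L `&` (f @^-1` [set t | t <= f y0]).
have Cc : closed C.
  apply: closedI; first exact: closed_spconv.
  apply: preimage_closed; last exact: closed_le.
  by move=> ? _; exact: sq_cont.
have f0 : 0 <= f y0 := n2_ge0 _.
have Ccomp : compact C.
  have Bc := @rV_compact R n (fun i => `[x ord0 i - (f y0 + 1), x ord0 i + (f y0 + 1)]%classic) (fun i => ltac:(exact: segment_compact)).
  apply: (subclosed_compact Cc Bc).
  move=> v [_ hv] i /=; rewrite in_itv /=.
  have hi : (v ord0 i - x ord0 i) ^+ 2 <= f v.
    rewrite /f /n2 /dot (bigD1 i) //= !mxE -expr2 lerDl.
    by apply: sumr_ge0 => j _; rewrite !mxE -expr2 sqr_ge0.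
  have hv' : f v <= f y0 := hv.
  apply/andP; split; nra.
have C0 : C !=set0 by exists y0; split => //=.
have [c cC cmin] := compact_EVT_min C0 Ccomp (continuous_subspaceT (@sq_cont R n x)).
move: cC; rewrite inE => -[cL cf].
exists c => // w wL; rewrite (n2B x c) (n2B x w).
have [wf|wf] := lerP (f w) (f y0).
  by apply: cmin; rewrite inE; split.
have : f c <= f y0 := cf.
rewrite /f; move: wf; rewrite /f; lra.
Qed.

Lemma core (R : realType) (n : nat) (L : set 'rV[R]_n) (x : 'rV[R]_n) (d : R) :
  spconv (spconv L) = L -> spconv L !=set0 -> 0 <= d ->
  (forall z, L z -> n2 (x - z) <= (1 + d) ^+ 2) ->
  exists2 y, spconv L y & n2 (x - y) <= d ^+ 2.
Proof.
move=> hLL [y0 hy0] d0 hx.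
have [y yM ymin] := exists_min x hy0.
exists y => //.
rewrite leNgt; apply/negP => Ed.
set E := n2 (x - y) in Ed ymin.
have E0 : 0 <= E := n2_ge0 _.
set e := Num.sqrt E.
have e2 : e ^+ 2 = E by rewrite sqr_sqrtr.
have e0 : 0 < e by rewrite sqrtr_gt0; nra.
set u := e^-1 *: (x - y).
have hxu : x = y + e *: u.
  by apply/rowP => i; rewrite !mxE; field; rewrite gt_eqF.
have nu : n2 u = 1.
  by rewrite n2Z -/E -e2 exprVn mulVf // expf_neq0 // gt_eqF.
have z0L : L (y - u).
  rewrite -hLL; apply/spconvP => w wM.
  rewrite leNgt; apply/negP => hw.
  set dd := w - y.
  have hwd : w - (y - u) = dd + u by apply/rowP => i; rewrite !mxE; ring.
  rewrite hwd n2D nu in hw.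
  set D := n2 dd in hw; set g := dot dd u in hw.
  have D0 : 0 <= D := n2_ge0 _.
  have [c [c0 cg cD]] : exists c : R, [/\ 0 <= c, - g < c & 2 * c < D].
    have [gp|gn] := ltrP 0 g.
      exists 0; split => //; first lra.
      have : D != 0.
        apply/negP => /eqP D00.
        have dd0 : dd = 0 by apply: n2_eq0; rewrite -/D D00.
        by move: gp; rewrite /g dd0 dot0l ltxx.
      rewrite mulr0; move: D0; rewrite le_eqVlt eq_sym => /orP[/eqP->|//]; by rewrite eqxx.
    exists (D / 4 - g / 2); split; lra.
  set v := dd + c *: u.
  set V := n2 v.
  have hV : V = D + 2 * c * g + c ^+ 2.
    by rewrite /V /v n2D n2Z nu dotZr -/g -/D; ring.
  have V0 : 0 <= V := n2_ge0 _.
  set k := Num.min 1 (Num.min (D - 2 * c) (e * (g + c))).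
  have k0 : 0 < k.
    rewrite /k !lt_min; apply/and3P; split => //; first lra.
    by apply: mulr_gt0 => //; lra.
  have k1 : k <= 1 by rewrite /k ge_min lexx.
  have k2 : k <= D - 2 * c by rewrite /k !ge_min lexx orbT.
  have k3 : k <= e * (g + c) by rewrite /k !ge_min lexx !orbT.
  set s := k / (V + 1).
  have V1 : 0 < V + 1 by lra.
  have s0 : 0 < s by apply: divr_gt0.
  have sV : s * V <= k.
    rewrite /s mulrAC ler_pdivrMr //; nra.
  have s1 : s <= 1.
    by rewrite /s ler_pdivrMr //; nra.
  set p := y + s *: v.
  have pM : spconv L p.
    apply/spconvP => z Lz.
    have ha : n2 (y - z) <= 1 by rewrite n2B; move/spconvP: yM; apply.
    have hb : n2 (w - z) <= 1 by rewrite n2B; move/spconvP: wM; apply.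
    set a := y - z in ha.
    have hwz : w - z = a + dd by apply/rowP => i; rewrite !mxE; ring.
    have hpz : z - p = - (a + s *: v) by apply/rowP => i; rewrite !mxE; ring.
    rewrite hpz n2N n2D n2Z dotZr /v dotDr dotZr -/V.
    rewrite hwz n2D -/D in hb.
    have hQ := n2_ge0 (a - u).
    rewrite n2D n2N dotNr nu in hQ.
    have A0 := n2_ge0 a.
    set A := n2 a in ha hb hQ A0 *.
    set P := dot a dd in hb *.
    set Q := dot a u in hQ *.
    have s0' : 0 <= s by lra.
    have h1 : s * (2 * P) <= s * (1 - A - D) by apply: ler_wpM2l => //; lra.
    have h2 : (s * c) * Q <= (s * c) * 1 by apply: ler_wpM2l; [apply: mulr_ge0|lra].
    have h3 : s * (s * V) <= s * (D - 2 * c) by apply: ler_wpM2l => //; lra.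
    have h4 : A * s <= s by nra.
    nra.
  have := ymin p pM.
  have hxp : x - p = e *: u - s *: v by rewrite hxu; apply/rowP => i; rewrite !mxE; ring.
  rewrite hxp n2D n2N dotNr (n2Z e u) (n2Z s v) (dotZl e u) (dotZr s v) nu -/V -/E.
  have huv : dot u v = g + c by rewrite /v dotDr dotZr (dotC u dd) -/g; change (dot u u) with (n2 u); rewrite nu mulr1.
  rewrite huv.
  have h5 : s * (s * V) <= s * (e * (g + c)) by nra.
  have h6 : 0 < s * (e * (g + c)) by apply: mulr_gt0 => //; apply: mulr_gt0 => //; lra.
  nra.
have := hx _ z0L.
have -> : x - (y - u) = (e + 1) *: u by rewrite hxu; apply/rowP => i; rewrite !mxE; ring.
rewrite n2Z nu mulr1 => h.
have : e <= d by nra.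
move=> ed; have : E <= d ^+ 2 by rewrite -e2; nra.
lra.
Qed.

Lemma spconv_anti (R : realType) (n : nat) (A B : set 'rV[R]_n) :
  A `<=` B -> spconv B `<=` spconv A.
Proof. by move=> AB y hy z Az; apply: hy; apply: AB. Qed.

Lemma sub_cc (R : realType) (n : nat) (A : set 'rV[R]_n) :
  A `<=` spconv (spconv A).
Proof. by move=> a Aa z hz; rewrite /cball /= edistC; apply: hz. Qed.

Lemma ccc (R : realType) (n : nat) (A : set 'rV[R]_n) :
  spconv (spconv (spconv A)) = spconv A.
Proof.
apply/seteqP; split; last exact: sub_cc.
exact: spconv_anti (@sub_cc R n A).
Qed.

Lemma cc_Sn (R : realType) (n : nat) (K : set 'rV[R]_n) :
  in_Sn K -> spconv (spconv K) = K.
Proof. by move=> [A ->]; exact: ccc. Qed.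

Lemma Sn_ne (R : realType) (n : nat) (K : set 'rV[R]_n) :
  in_Sn K -> K <> setT -> spconv K !=set0.
Proof.
move=> [A hA] hT.
case: (pselect (A !=set0)) => [[a Aa]|nA].
  by exists a; rewrite hA; apply: sub_cc.
exfalso; apply: hT; rewrite hA; apply/seteqP; split => // y _ z Az.
by exfalso; apply: nA; exists z.
Qed.

Lemma half (R : realType) (n : nat) (K L : set 'rV[R]_n) (l : R) :
  spconv (spconv L) = L -> spconv L !=set0 -> 0 <= l ->
  L `<=` parallel_body K l -> spconv K `<=` parallel_body (spconv L) l.
Proof.
move=> hLL hL0 l0 hLK x xK.
have hx : forall z, L z -> n2 (x - z) <= (1 + l) ^+ 2.
  move=> z Lz.
  have [w Kw hwz] := hLK z Lz.
  have h1 : n2 (x - w) <= 1 ^+ 2.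
    by rewrite expr1n n2B; move/spconvP: xK; apply.
  have h2 : n2 (w - z) <= l ^+ 2 by rewrite -edist_le.
  have -> : x - z = (x - w) + (w - z) by apply/rowP => i; rewrite !mxE; ring.
  rewrite n2D; have := dot_le ler01 l0 h1 h2.
  move: h1 h2; rewrite expr1n; nra.
have [y yM hy] := core hLL hL0 l0 hx.
by exists y => //; rewrite /cball /= edist_le // n2B.
Qed.

Lemma feas (R : realType) (n : nat) (K L : set 'rV[R]_n) (l : R) :
  spconv (spconv K) = K -> spconv K !=set0 ->
  spconv (spconv L) = L -> spconv L !=set0 ->
  (0 <= l /\ K `<=` parallel_body L l /\ L `<=` parallel_body K l) ->
  (0 <= l /\ spconv K `<=` parallel_body (spconv L) l /\
   spconv L `<=` parallel_body (spconv K) l).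
Proof.
move=> hK hK0 hL hL0 [l0 [KL LK]]; split => //; split.
  exact: half.
exact: half.
Qed.

Theorem proposition2p4 (R : realType) (n : nat) (hn : (1 <= n)%N)
  (K L : set 'rV[R]_n) :
  in_Sn K -> K <> setT -> K <> set0 ->
  in_Sn L -> L <> setT -> L <> set0 ->
  hausdorff (spconv K) (spconv L) = hausdorff K L.
Proof.
move=> SK KT K0 SL LT L0.
have hK := cc_Sn SK; have hL := cc_Sn SL.
have hK0 := Sn_ne SK KT; have hL0 := Sn_ne SL LT.
have hK0' : spconv (spconv K) !=set0.
  by rewrite hK; apply/set0P/eqP.
have hL0' : spconv (spconv L) !=set0.
  by rewrite hL; apply/set0P/eqP.
rewrite /hausdorff; congr inf; apply/seteqP; split => l hl.
  have := feas (ccc K) hK0' (ccc L) hL0' hl.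
  by rewrite hK hL.
exact: feas.
Qed.
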